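(* Consider a particle in the plane with dimensionless canonical observables $x,y,p_x,p_y$ ($[x,p_x]=[y,p_y]=i$, other commutators zero) and the Hamiltonian $H(t)=\tfrac12\big(p_x^2+p_y^2+\beta(t)^2(x^2+y^2)\big)-\beta(t)M_z$, with $M_z=xp_y-yp_x$ and $\beta(t)=\beta_0+\beta_1\sin(2\pi t)$, $\beta_0,\beta_1\in\mathbb R$. Let $b(t)$ be the real $2\times2$ matrix solving $\frac{db}{dt}=\begin{pmatrix}0&1\\-\beta(t)^2&0\end{pmatrix}b(t)$, $b(0)=\mathbb 1$, and let $r(t)$ be the $4\times4$ matrix rotating simultaneously the pairs $(x,y)$ and $(p_x,p_y)$ by the angle $\gamma(t)=\int_0^t\beta(t')dt'$ about the $z$-axis, so that the evolution matrix $u(t)$ defined by $(x(t),y(t),p_x(t),p_y(t))^{T}=u(t)\,(x,y,p_x,p_y)^{T}$ (classical or Heisenberg variables) equals $u(t)=r(t)\,\mathrm{diag}(b(t),b(t))$ in the basis $(x,p_x,y,p_y)$ for each $b$-block. Suppose that for some positive integer $n$ one has $b(n)=\mathbb 1$, and that $\gamma(n)=2\pi k/m$ with $k,m$ positive integers such that $k/m\notin\mathbb Z$. Then $u(mn)=\mathbb 1$ (the full evolution closes into a loop at $t=mn$), and the loop center $\mathbf X=\frac{1}{mn}\int_0^{mn}(x(t),y(t))\,dt$ vanishes identically, both for the classical trajectories and for the quantum Heisenberg observables.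
   Context: Units: time is measured in periods of the field ($T=1$), $\hbar=1$, particle mass $1$; $\beta$ is the dimensionless magnetic field amplitude. The Hamiltonian is quadratic, so classical and quantum (Heisenberg) trajectories are given by the same matrix $u(t)$. *)

(* Defs.v *)
(* Units: period T = 1, hbar = 1, mass 1. *)
From Stdlib Require Import Reals Lra.
From Coquelicot Require Import Coquelicot.
Open Scope R_scope.

Definition beta (beta0 beta1 : R) (t : R) : R := beta0 + beta1 * sin (2 * PI * t).

Definition gamma (beta0 beta1 : R) (t : R) : R := RInt (beta beta0 beta1) 0 t.

(* Hamilton's equations for
   H = 1/2 (px^2 + py^2 + beta^2 (x^2+y^2)) - beta (x py - y px):
     x'  =  px + beta y
     y'  =  py - beta x
     px' = -beta^2 x + beta py
     py' = -beta^2 y - beta px                                           *)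
Definition hamilton_traj (beta0 beta1 : R) (X Y PX PY : R -> R) : Prop :=
  forall t : R,
    is_derive X t (PX t + beta beta0 beta1 t * Y t) /\
    is_derive Y t (PY t - beta beta0 beta1 t * X t) /\
    is_derive PX t (- (beta beta0 beta1 t) ^ 2 * X t + beta beta0 beta1 t * PY t) /\
    is_derive PY t (- (beta beta0 beta1 t) ^ 2 * Y t - beta beta0 beta1 t * PX t).

Definition b_solution (beta0 beta1 : R) (b11 b12 b21 b22 : R -> R) : Prop :=
  (forall t : R,
    is_derive b11 t (b21 t) /\
    is_derive b12 t (b22 t) /\
    is_derive b21 t (- (beta beta0 beta1 t) ^ 2 * b11 t) /\
    is_derive b22 t (- (beta beta0 beta1 t) ^ 2 * b12 t)) /\
  b11 0 = 1 /\ b12 0 = 0 /\ b21 0 = 0 /\ b22 0 = 1.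

(* Main.v *)
Require Import Defs.
From Stdlib Require Import Reals ZArith Lra Lia.
From Coquelicot Require Import Coquelicot.
Open Scope R_scope.

Lemma D_eq (f : R -> R) (x a b : R) : is_derive f x a -> a = b -> is_derive f x b.
Proof. intros H ->; exact H. Qed.

Lemma D_mult (f g : R -> R) x a b : is_derive f x a -> is_derive g x b ->
  is_derive (fun t => f t * g t) x (a * g x + f x * b).
Proof. intros Ha Hb. apply (is_derive_mult f g x a b Ha Hb). intros; apply Rmult_comm. Qed.

Lemma D_plus (f g : R -> R) x a b : is_derive f x a -> is_derive g x b ->
  is_derive (fun t => f t + g t) x (a + b).
Proof. intros Ha Hb. apply (is_derive_plus f g x a b Ha Hb). Qed.

Lemma D_minus (f g : R -> R) x a b : is_derive f x a -> is_derive g x b ->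
  is_derive (fun t => f t - g t) x (a - b).
Proof. intros Ha Hb. apply (is_derive_minus f g x a b Ha Hb). Qed.

Lemma D_const (c x : R) : is_derive (fun _ => c) x 0.
Proof. apply (is_derive_const (K:=R_AbsRing) (V:=R_NormedModule) c x). Qed.

Lemma D_cos (g : R -> R) x a : is_derive g x a -> is_derive (fun t => cos (g t)) x (- sin (g x) * a).
Proof. intros H. eapply D_eq. apply (is_derive_comp cos g x _ a (is_derive_cos (g x)) H).
  simpl. unfold scal; simpl; unfold mult; simpl. ring. Qed.

Lemma D_sin (g : R -> R) x a : is_derive g x a -> is_derive (fun t => sin (g t)) x (cos (g x) * a).
Proof. intros H. eapply D_eq. apply (is_derive_comp sin g x _ a (is_derive_sin (g x)) H).
  simpl. unfold scal; simpl; unfold mult; simpl. ring. Qed.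

Lemma D_exp (g : R -> R) x a : is_derive g x a -> is_derive (fun t => exp (g t)) x (exp (g x) * a).
Proof. intros H. eapply D_eq. apply (is_derive_comp exp g x _ a (is_derive_exp (g x)) H).
  simpl. unfold scal; simpl; unfold mult; simpl. ring. Qed.

Lemma D_pow2 (f : R -> R) (x a : R) : is_derive f x a -> is_derive (fun t => f t ^ 2) x (2 * f x * a).
Proof. intros H. apply (is_derive_ext (fun t => f t * f t)).
  intros tt. change (f tt * f tt = f tt ^ 2)%R. ring. eapply D_eq. apply (D_mult f f x a a H H). ring. Qed.

Lemma D_shift (f : R -> R) (c x a : R) : is_derive f (x + c) a -> is_derive (fun t => f (t + c)) x a.
Proof. intros H.
  assert (H1 : is_derive (fun t => t + c) x 1).
  { eapply D_eq. apply D_plus. apply is_derive_id. apply D_const. simpl. unfold one; simpl. ring. }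
  eapply D_eq. apply (is_derive_comp f (fun t => t + c) x a 1 H H1).
  unfold scal; simpl; unfold mult; simpl; ring. Qed.

Lemma beta_bound b0 b1 t : (beta b0 b1 t) ^ 2 <= (Rabs b0 + Rabs b1) ^ 2.
Proof.
  unfold beta. assert (Hs := SIN_bound (2 * PI * t)).
  assert (H1 : Rabs (b0 + b1 * sin (2 * PI * t)) <= Rabs b0 + Rabs b1).
  { eapply Rle_trans. apply Rabs_triang. rewrite Rabs_mult.
    assert (Rabs (sin (2*PI*t)) <= 1) by (apply Rabs_le; lra).
    assert (0 <= Rabs b1) by apply Rabs_pos. nra. }
  assert (0 <= Rabs (b0 + b1 * sin (2 * PI * t))) by apply Rabs_pos.
  rewrite <- (pow2_abs (b0 + b1 * sin (2 * PI * t))). nra.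
Qed.

Lemma uniq b0 b1 (d e : R -> R) :
  (forall t, is_derive d t (e t) /\ is_derive e t (- (beta b0 b1 t) ^ 2 * d t)) ->
  d 0 = 0 -> e 0 = 0 -> forall t, 0 <= t -> d t = 0 /\ e t = 0.
Proof.
  intros Hd Hd0 He0 t Ht.
  set (K := 1 + (Rabs b0 + Rabs b1) ^ 2).
  set (G := fun s => (d s ^ 2 + e s ^ 2) * exp (- (K * s))).
  set (dG := fun s => (2 * d s * e s + 2 * e s * (- (beta b0 b1 s) ^ 2 * d s)) * exp (- (K * s))
      + (d s ^ 2 + e s ^ 2) * (exp (- (K * s)) * (- (K * 1)))).
  assert (HG : forall s, is_derive G s (dG s)).
  { intro s. destruct (Hd s) as [H1 H2]. unfold G, dG.
    eapply D_eq. apply D_mult. apply D_plus; apply D_pow2; eassumption.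
    apply D_exp. eapply D_eq. apply (is_derive_opp (fun s => K * s)). apply is_derive_scal. apply is_derive_id.
    simpl. reflexivity. reflexivity. }
  assert (HdG : forall s, dG s <= 0).
  { intro s. unfold dG. assert (Hb := beta_bound b0 b1 s).
    assert (Hex := exp_pos (- (K * s))).
    set (E := exp (- (K * s))) in *. set (bb := beta b0 b1 s ^ 2).
    assert (Hbb : 0 <= bb) by (unfold bb; nra).
    assert (Hq1 : 0 <= (d s - e s)^2) by apply pow2_ge_0.
    assert (Hq2 : 0 <= bb * (d s + e s)^2) by (apply Rmult_le_pos; [lra | apply pow2_ge_0]).
    assert (Hk : bb <= K - 1) by (unfold K, bb in *; lra).
    assert (0 <= d s ^ 2 + e s ^ 2) by (assert (Hx := pow2_ge_0 (d s)); assert (Hy := pow2_ge_0 (e s)); lra).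
    assert (Hq3 : 0 <= (K - 1 - bb) * (d s ^ 2 + e s ^ 2)) by (apply Rmult_le_pos; lra).
    assert (HH: 2 * d s * e s + 2 * e s * (- bb * d s) - K * (d s ^ 2 + e s ^ 2) <= 0).
    { replace (2 * d s * e s + 2 * e s * (- bb * d s) - K * (d s ^ 2 + e s ^ 2)) with
        (- ((d s - e s)^2 + bb * (d s + e s)^2 + (K - 1 - bb) * (d s ^ 2 + e s ^ 2))) by ring. lra. }
    replace (- beta b0 b1 s ^ 2) with (- bb) by (unfold bb; ring).
    assert (E * (2 * d s * e s + 2 * e s * (- bb * d s) - K * (d s ^ 2 + e s ^ 2)) <= 0).
    { rewrite <- (Rmult_0_r E). apply Rmult_le_compat_l; lra. }
    replace ((2 * d s * e s + 2 * e s * (- bb * d s)) * E + (d s ^ 2 + e s ^ 2) * (E * - (K * 1)))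
      with (E * (2 * d s * e s + 2 * e s * (- bb * d s) - K * (d s ^ 2 + e s ^ 2))) by ring.
    exact H0. }
  destruct (MVT_cor4 G dG 0 (Rabs t) (fun c _ => HG c) t) as [c [Hc _]].
  rewrite Rminus_0_r; apply Rle_refl.
  assert (G0 : G 0 = 0) by (unfold G; rewrite Hd0, He0; ring).
  assert (Gt : G t <= 0) by (rewrite G0 in Hc; specialize (HdG c); nra).
  unfold G in Gt. assert (Hex := exp_pos (- (K * t))).
  assert (d t ^ 2 + e t ^ 2 <= 0) by nra.
  split; nra.
Qed.

Lemma sc1 x : sin x * sin x + cos x * cos x = 1.
Proof. generalize (sin2_cos2 x); unfold Rsqr; lra. Qed.

Definition sol b0 b1 (w q : R -> R) : Prop :=
  forall t, is_derive w t (q t) /\ is_derive q t (- (beta b0 b1 t) ^ 2 * w t).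

Lemma beta_per b0 b1 (n : nat) t : beta b0 b1 (t + INR n) = beta b0 b1 t.
Proof. unfold beta. replace (2 * PI * (t + INR n)) with (2 * PI * t + 2 * INR n * PI) by ring.
  rewrite sin_period. reflexivity. Qed.

Lemma D_cmul (f : R -> R) (c x a : R) : is_derive f x a -> is_derive (fun t => f t * c) x (a * c).
Proof. intros H. eapply D_eq. apply (D_mult f (fun _ => c) x a 0 H (D_const c x)). ring. Qed.

Lemma sol_rep b0 b1 b11 b12 b21 b22 w q :
  b_solution b0 b1 b11 b12 b21 b22 -> sol b0 b1 w q ->
  forall t, 0 <= t -> w t = b11 t * w 0 + b12 t * q 0 /\ q t = b21 t * w 0 + b22 t * q 0.
Proof.
  intros [Hb [H11 [H12 [H21 H22]]]] Hs t Ht.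
  destruct (uniq b0 b1 (fun t => w t - (b11 t * w 0 + b12 t * q 0))
                        (fun t => q t - (b21 t * w 0 + b22 t * q 0))) with (t := t) as [A B]; auto.
  - intro s. destruct (Hb s) as [D1 [D2 [D3 D4]]]. destruct (Hs s) as [E1 E2]. split.
    + apply D_minus. exact E1. apply D_plus; apply D_cmul; assumption.
    + eapply D_eq. apply D_minus. exact E2. apply D_plus; apply D_cmul; eassumption. ring.
  - simpl. rewrite H11, H12. ring.
  - simpl. rewrite H21, H22. ring.
  - split; lra.
Qed.

Lemma sol_per b0 b1 b11 b12 b21 b22 (n : nat) w q :
  b_solution b0 b1 b11 b12 b21 b22 ->
  b11 (INR n) = 1 -> b12 (INR n) = 0 -> b21 (INR n) = 0 -> b22 (INR n) = 1 ->
  sol b0 b1 w q ->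
  forall t, 0 <= t -> w (t + INR n) = w t /\ q (t + INR n) = q t.
Proof.
  intros Hb h11 h12 h21 h22 Hs t Ht.
  destruct (sol_rep _ _ _ _ _ _ _ _ Hb Hs (INR n) (pos_INR n)) as [R1 R2].
  rewrite h11, h12 in R1. rewrite h21, h22 in R2.
  destruct (uniq b0 b1 (fun t => w (t + INR n) - w t) (fun t => q (t + INR n) - q t)) with (t := t) as [A B]; auto.
  - intro s. destruct (Hs s) as [E1 E2]. destruct (Hs (s + INR n)) as [F1 F2]. split.
    + apply D_minus. apply D_shift. exact F1. exact E1.
    + eapply D_eq. apply D_minus. apply D_shift. exact F2. exact E2.
      rewrite beta_per. ring.
  - simpl. rewrite Rplus_0_l, R1. ring.
  - simpl. rewrite Rplus_0_l, R2. ring.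
  - split; lra.
Qed.

Lemma sol_iter b0 b1 b11 b12 b21 b22 (n : nat) w q :
  b_solution b0 b1 b11 b12 b21 b22 ->
  b11 (INR n) = 1 -> b12 (INR n) = 0 -> b21 (INR n) = 0 -> b22 (INR n) = 1 ->
  sol b0 b1 w q ->
  forall j t, 0 <= t -> w (t + INR j * INR n) = w t /\ q (t + INR j * INR n) = q t.
Proof.
  intros Hb h11 h12 h21 h22 Hs j. induction j as [|j IH]; intros t Ht.
  - simpl. rewrite Rmult_0_l, Rplus_0_r. split; reflexivity.
  - replace (t + INR (S j) * INR n) with ((t + INR j * INR n) + INR n) by (rewrite S_INR; ring).
    assert (0 <= t + INR j * INR n) by (assert (Hp := pos_INR j); assert (Hq := pos_INR n); nra).
    destruct (sol_per _ _ _ _ _ _ n w q Hb h11 h12 h21 h22 Hs _ H) as [A B].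
    rewrite A, B. apply IH; exact Ht.
Qed.

Lemma beta_cont b0 b1 t : continuous (beta b0 b1) t.
Proof. apply (ex_derive_continuous (K:=R_AbsRing) (V:=R_NormedModule)). unfold beta. auto_derive. auto. Qed.

Lemma beta_int b0 b1 a b : ex_RInt (beta b0 b1) a b.
Proof. apply (ex_RInt_continuous (V:=R_CompleteNormedModule)). intros; apply beta_cont. Qed.

Lemma gamma_derive b0 b1 t : is_derive (gamma b0 b1) t (beta b0 b1 t).
Proof.
  apply (is_derive_RInt (V:=R_NormedModule) (beta b0 b1) (gamma b0 b1) 0). apply filter_forall. intro x. unfold gamma. apply (RInt_correct (V:=R_CompleteNormedModule)), beta_int.
  apply beta_cont.
Qed.

Lemma gamma_shift b0 b1 (n : nat) t : gamma b0 b1 (t + INR n) = gamma b0 b1 t + gamma b0 b1 (INR n).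
Proof.
  unfold gamma. rewrite <- (RInt_Chasles (beta b0 b1) 0 (INR n) (t + INR n)) by apply beta_int.
  change (plus ?a ?b) with (a + b). rewrite Rplus_comm. f_equal.
  replace (RInt (beta b0 b1) (INR n) (t + INR n)) with
    (RInt (beta b0 b1) (1 * 0 + INR n) (1 * t + INR n)) by (f_equal; ring).
  rewrite <- RInt_comp_lin by apply beta_int.
  apply RInt_ext. intros x _. unfold scal; simpl; unfold mult; simpl.
  rewrite Rmult_1_l, Rmult_1_l. apply beta_per.
Qed.

Lemma gamma0 b0 b1 : gamma b0 b1 0 = 0.
Proof. unfold gamma. rewrite RInt_point. reflexivity. Qed.

Lemma gamma_iter b0 b1 (n j : nat) t :
  gamma b0 b1 (t + INR j * INR n) = gamma b0 b1 t + INR j * gamma b0 b1 (INR n).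
Proof.
  induction j as [|j IH].
  - simpl. rewrite !Rmult_0_l, !Rplus_0_r. reflexivity.
  - replace (t + INR (S j) * INR n) with ((t + INR j * INR n) + INR n) by (rewrite S_INR; ring).
    rewrite gamma_shift, IH, S_INR. ring.
Qed.

Lemma shift_formula (g u v : R -> R) (a b th : R) :
  g b = g a + th ->
  cos (g b) * u b - sin (g b) * v b = cos (g a) * u a - sin (g a) * v a ->
  sin (g b) * u b + cos (g b) * v b = sin (g a) * u a + cos (g a) * v a ->
  u b = cos th * u a + sin th * v a /\ v b = - sin th * u a + cos th * v a.
Proof.
  intros Hg H1 H2.
  assert (E1 : u b = cos (g b) * (cos (g b) * u b - sin (g b) * v b) + sin (g b) * (sin (g b) * u b + cos (g b) * v b)).
  { transitivity (u b * (sin (g b) * sin (g b) + cos (g b) * cos (g b))). rewrite sc1; ring. ring. }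
  assert (E2 : v b = - sin (g b) * (cos (g b) * u b - sin (g b) * v b) + cos (g b) * (sin (g b) * u b + cos (g b) * v b)).
  { transitivity (v b * (sin (g b) * sin (g b) + cos (g b) * cos (g b))). rewrite sc1; ring. ring. }
  rewrite H1, H2, Hg, cos_plus, sin_plus in E1. rewrite H1, H2, Hg, cos_plus, sin_plus in E2.
  assert (S := sc1 (g a)). split.
  - rewrite E1. transitivity ((cos th * u a + sin th * v a) * (sin (g a) * sin (g a) + cos (g a) * cos (g a))).
    ring. rewrite S; ring.
  - rewrite E2. transitivity ((- sin th * u a + cos th * v a) * (sin (g a) * sin (g a) + cos (g a) * cos (g a))).
    ring. rewrite S; ring.
Qed.

Fixpoint csum (th : R) (j : nat) : R :=
  match j with O => 0 | S j' => csum th j' + cos (INR j' * th) end.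
Fixpoint ssum (th : R) (j : nat) : R :=
  match j with O => 0 | S j' => ssum th j' + sin (INR j' * th) end.

Lemma csum_tel al j : 2 * sin al * csum (2 * al) j = sin ((2 * INR j - 1) * al) + sin al.
Proof.
  induction j as [|j IH].
  - simpl. replace ((2 * 0 - 1) * al) with (- al) by ring. rewrite sin_neg. ring.
  - simpl csum. rewrite Rmult_plus_distr_l, IH.
    replace ((2 * INR (S j) - 1) * al) with (INR j * (2 * al) + al) by (rewrite S_INR; ring).
    replace ((2 * INR j - 1) * al) with (INR j * (2 * al) - al) by ring.
    rewrite sin_plus, sin_minus. ring.
Qed.

Lemma ssum_tel al j : 2 * sin al * ssum (2 * al) j = cos al - cos ((2 * INR j - 1) * al).
Proof.
  induction j as [|j IH].
  - simpl. replace ((2 * 0 - 1) * al) with (- al) by ring. rewrite cos_neg. ring.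
  - simpl ssum. rewrite Rmult_plus_distr_l, IH.
    replace ((2 * INR (S j) - 1) * al) with (INR j * (2 * al) + al) by (rewrite S_INR; ring).
    replace ((2 * INR j - 1) * al) with (INR j * (2 * al) - al) by ring.
    rewrite cos_plus, cos_minus. ring.
Qed.

Lemma cos2k k : cos (2 * INR k * PI) = 1.
Proof. rewrite <- (Rplus_0_l (2 * INR k * PI)), cos_period. apply cos_0. Qed.
Lemma sin2k k : sin (2 * INR k * PI) = 0.
Proof. rewrite <- (Rplus_0_l (2 * INR k * PI)), sin_period. apply sin_0. Qed.

Lemma sums_zero (k m : nat) : (0 < m)%nat -> (forall z : Z, INR k / INR m <> IZR z) ->
  csum (2 * (PI * INR k / INR m)) m = 0 /\ ssum (2 * (PI * INR k / INR m)) m = 0.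
Proof.
  intros Hm Hz. set (al := PI * INR k / INR m).
  assert (Hm' : INR m <> 0) by (apply not_0_INR; lia).
  assert (Hs : sin al <> 0).
  { intro H. destruct (sin_eq_0_0 al H) as [z Hz']. apply (Hz z). unfold al in Hz'.
    assert (PI <> 0) by (generalize PI_RGT_0; lra).
    apply (Rmult_eq_reg_l PI); auto. rewrite (Rmult_comm PI (IZR z)), <- Hz'. field. auto. }
  assert (Hx : (2 * INR m - 1) * al = 2 * INR k * PI - al) by (unfold al; field; auto).
  generalize (csum_tel al m) (ssum_tel al m). rewrite Hx, sin_minus, cos_minus, cos2k, sin2k.
  intros A B. split.
  - apply (Rmult_eq_reg_l (2 * sin al)). rewrite A; ring. generalize Hs; lra.
  - apply (Rmult_eq_reg_l (2 * sin al)). rewrite B; ring. generalize Hs; lra.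
Qed.

Lemma lin_int (f h : R -> R) (a b c d : R) : ex_RInt f a b -> ex_RInt h a b ->
  RInt (fun y => c * f y + d * h y) a b = c * RInt f a b + d * RInt h a b.
Proof.
  intros Ef Eh. apply (is_RInt_unique (V:=R_CompleteNormedModule)).
  apply (is_RInt_plus (V:=R_NormedModule) (fun y => c * f y) (fun y => d * h y)).
  apply (is_RInt_scal (V:=R_NormedModule) f a b c). apply (RInt_correct (V:=R_CompleteNormedModule)); auto.
  apply (is_RInt_scal (V:=R_NormedModule) h a b d). apply (RInt_correct (V:=R_CompleteNormedModule)); auto.
Qed.

Lemma traj_int b0 b1 X Y PX PY a b : hamilton_traj b0 b1 X Y PX PY -> ex_RInt X a b /\ ex_RInt Y a b.
Proof.
  intros Hh. split; apply (ex_RInt_continuous (V:=R_CompleteNormedModule)); intros z _;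
  apply (ex_derive_continuous (K:=R_AbsRing) (V:=R_NormedModule)); destruct (Hh z) as [H1 [H2 _]].
  exact (ex_intro _ _ H1). exact (ex_intro _ _ H2).
Qed.

Lemma rotm (g u v : R -> R) (t a b c : R) : is_derive g t a -> is_derive u t b -> is_derive v t c ->
  is_derive (fun s => cos (g s) * u s - sin (g s) * v s) t
    ((- sin (g t) * a) * u t + cos (g t) * b - ((cos (g t) * a) * v t + sin (g t) * c)).
Proof. intros Hg Hu Hv. apply D_minus. apply (D_mult (fun s => cos (g s)) u t _ _ (D_cos g t a Hg) Hu).
  apply (D_mult (fun s => sin (g s)) v t _ _ (D_sin g t a Hg) Hv). Qed.

Lemma rotp (g u v : R -> R) (t a b c : R) : is_derive g t a -> is_derive u t b -> is_derive v t c ->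
  is_derive (fun s => sin (g s) * u s + cos (g s) * v s) t
    ((cos (g t) * a) * u t + sin (g t) * b + ((- sin (g t) * a) * v t + cos (g t) * c)).
Proof. intros Hg Hu Hv. apply D_plus. apply (D_mult (fun s => sin (g s)) u t _ _ (D_sin g t a Hg) Hu).
  apply (D_mult (fun s => cos (g s)) v t _ _ (D_cos g t a Hg) Hv). Qed.

Lemma z2 a b : 0 = 0 * a + 0 * b. Proof. ring. Qed.
Lemma z3 a b : 0 = 0 * a - 0 * b. Proof. ring. Qed.

Theorem proposition2 (beta0 beta1 : R) (n k m : nat)
  (b11 b12 b21 b22 : R -> R) :
  (0 < n)%nat -> (0 < k)%nat -> (0 < m)%nat ->
  b_solution beta0 beta1 b11 b12 b21 b22 ->
  b11 (INR n) = 1 -> b12 (INR n) = 0 -> b21 (INR n) = 0 -> b22 (INR n) = 1 ->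
  gamma beta0 beta1 (INR n) = 2 * PI * INR k / INR m ->
  (forall z : Z, INR k / INR m <> IZR z) ->
  forall X Y PX PY : R -> R,
    hamilton_traj beta0 beta1 X Y PX PY ->
    (X (INR (m * n)) = X 0 /\ Y (INR (m * n)) = Y 0 /\
     PX (INR (m * n)) = PX 0 /\ PY (INR (m * n)) = PY 0) /\
    (/ INR (m * n) * RInt X 0 (INR (m * n)) = 0 /\
     / INR (m * n) * RInt Y 0 (INR (m * n)) = 0).
Proof.
  intros Hn Hk Hm Hb h11 h12 h21 h22 Hg Hz X Y PX PY Hh.
  assert (S1 : sol beta0 beta1
     (fun t => cos (gamma beta0 beta1 t) * X t - sin (gamma beta0 beta1 t) * Y t)
     (fun t => cos (gamma beta0 beta1 t) * PX t - sin (gamma beta0 beta1 t) * PY t)).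
  { intro t. destruct (Hh t) as [DX [DY [DPX DPY]]]. assert (Dg := gamma_derive beta0 beta1 t).
    split; (eapply D_eq; [apply rotm; [exact Dg | eassumption | eassumption] | cbv beta; ring]). }
  assert (S2 : sol beta0 beta1
     (fun t => sin (gamma beta0 beta1 t) * X t + cos (gamma beta0 beta1 t) * Y t)
     (fun t => sin (gamma beta0 beta1 t) * PX t + cos (gamma beta0 beta1 t) * PY t)).
  { intro t. destruct (Hh t) as [DX [DY [DPX DPY]]]. assert (Dg := gamma_derive beta0 beta1 t).
    split; (eapply D_eq; [apply rotp; [exact Dg | eassumption | eassumption] | cbv beta; ring]). }
  set (th := gamma beta0 beta1 (INR n)).
  assert (Key : forall j t, 0 <= t ->
    (X (t + INR j * INR n) = cos (INR j * th) * X t + sin (INR j * th) * Y t /\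
     Y (t + INR j * INR n) = - sin (INR j * th) * X t + cos (INR j * th) * Y t) /\
    (PX (t + INR j * INR n) = cos (INR j * th) * PX t + sin (INR j * th) * PY t /\
     PY (t + INR j * INR n) = - sin (INR j * th) * PX t + cos (INR j * th) * PY t)).
  { intros j t Ht.
    destruct (sol_iter _ _ _ _ _ _ n _ _ Hb h11 h12 h21 h22 S1 j t Ht) as [A1 B1].
    destruct (sol_iter _ _ _ _ _ _ n _ _ Hb h11 h12 h21 h22 S2 j t Ht) as [A2 B2].
    assert (Hgi := gamma_iter beta0 beta1 n j t).
    split; apply (shift_formula (gamma beta0 beta1)); assumption. }
  assert (Hm' : INR m <> 0) by (apply not_0_INR; lia).
  assert (Hmth : INR m * th = 2 * INR k * PI) by (unfold th; rewrite Hg; field; auto).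
  rewrite mult_INR. split.
  - destruct (Key m 0 (Rle_refl 0)) as [[A B] [C D]].
    rewrite Rplus_0_l, Hmth, cos2k, sin2k in *.
    repeat split; [rewrite A | rewrite B | rewrite C | rewrite D]; ring.
  - assert (HN : 0 <= INR n) by apply pos_INR.
    assert (Int : forall j, RInt X 0 (INR j * INR n) = csum th j * RInt X 0 (INR n) + ssum th j * RInt Y 0 (INR n) /\
                            RInt Y 0 (INR j * INR n) = csum th j * RInt Y 0 (INR n) - ssum th j * RInt X 0 (INR n)).
    { induction j as [|j IH].
      - simpl. rewrite Rmult_0_l, !RInt_point. split; [apply z2 | apply z3].
      - assert (E : INR (S j) * INR n = INR j * INR n + INR n) by (rewrite S_INR; ring).
        rewrite E.
        assert (Hj : 0 <= INR j * INR n) by (assert (Hp := pos_INR j); nra).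
        assert (Sh : forall F : R -> R, RInt F (INR j * INR n) (INR j * INR n + INR n) =
                   RInt (fun y => scal 1 (F (1 * y + INR j * INR n))) 0 (INR n) ->
                   RInt F (INR j * INR n) (INR j * INR n + INR n) =
                   RInt (fun y => F (y + INR j * INR n)) 0 (INR n)).
        { intros F HF. rewrite HF. apply RInt_ext. intros x _.
          unfold scal; simpl; unfold mult; simpl. rewrite !Rmult_1_l. reflexivity. }
        assert (CX : RInt X (INR j * INR n) (INR j * INR n + INR n) =
                   RInt (fun y => X (y + INR j * INR n)) 0 (INR n)).
        { apply Sh. replace (RInt X (INR j * INR n) (INR j * INR n + INR n)) with
            (RInt X (1 * 0 + INR j * INR n) (1 * INR n + INR j * INR n)) by (f_equal; ring).
          symmetry. apply (RInt_comp_lin (V:=R_CompleteNormedModule)). apply (traj_int _ _ _ _ _ _ _ _ Hh). }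
        assert (CY : RInt Y (INR j * INR n) (INR j * INR n + INR n) =
                   RInt (fun y => Y (y + INR j * INR n)) 0 (INR n)).
        { apply Sh. replace (RInt Y (INR j * INR n) (INR j * INR n + INR n)) with
            (RInt Y (1 * 0 + INR j * INR n) (1 * INR n + INR j * INR n)) by (f_equal; ring).
          symmetry. apply (RInt_comp_lin (V:=R_CompleteNormedModule)). apply (traj_int _ _ _ _ _ _ _ _ Hh). }
        rewrite <- (RInt_Chasles X 0 (INR j * INR n) (INR j * INR n + INR n)) by apply (traj_int _ _ _ _ _ _ _ _ Hh).
        rewrite <- (RInt_Chasles Y 0 (INR j * INR n) (INR j * INR n + INR n)) by apply (traj_int _ _ _ _ _ _ _ _ Hh).
        change (plus ?a ?b) with (a + b). change (plus ?a ?b) with (a + b). rewrite CX, CY.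
        rewrite (RInt_ext (fun y => X (y + INR j * INR n))
                          (fun y => cos (INR j * th) * X y + sin (INR j * th) * Y y)).
        2:{ intros x Hx. rewrite Rmin_left in Hx by lra. apply (Key j x). lra. }
        rewrite (RInt_ext (fun y => Y (y + INR j * INR n))
                          (fun y => (- sin (INR j * th)) * X y + cos (INR j * th) * Y y)).
        2:{ intros x Hx. rewrite Rmin_left in Hx by lra. apply (Key j x). lra. }
        destruct (traj_int _ _ _ _ _ _ 0 (INR n) Hh) as [EX EY].
        rewrite !lin_int by assumption. destruct IH as [IH1 IH2]. rewrite IH1, IH2.
        simpl csum; simpl ssum. split; match goal with |- ?l = ?r => change (l = r :> R) end; ring. }
    assert (Hth : th = 2 * (PI * INR k / INR m)) by (unfold th; rewrite Hg; field; auto).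
    destruct (sums_zero k m Hm Hz) as [Cz Sz]. rewrite <- Hth in Cz, Sz.
    destruct (Int m) as [I1 I2]. rewrite I1, I2, Cz, Sz. split; ring.
Qed.
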